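(* Let $f:[0,\infty)\to[0,\infty)$ be a differentiable convex function with $f(0)=0$, let $0<m<M$, and let $\sigma$ be a matrix mean. Then for every unitarily invariant norm $|||\cdot|||$ on $\mathbb{M}_n$ and all $A,B\in\mathbb{P}_n^+$ with spectra contained in $[m,M]$, $$|||f(A)\sigma f(B)-f(A\sigma B)|||\le \big(f'(M)-f'(0)\big)\,|||A\sigma B|||.$$
   Context: $\mathbb{M}_n$ is the algebra of $n\times n$ complex matrices; a norm $|||\cdot|||$ on $\mathbb{M}_n$ is unitarily invariant if $|||UAV|||=|||A|||$ for all $A$ and all unitaries $U,V$. $\mathbb{P}_n$ (resp. $\mathbb{P}_n^+$) denotes the set of $n\times n$ complex positive semidefinite (resp. positive definite) matrices, $I$ is the identity matrix and $\le$ is the Löwner order. For a Hermitian matrix $A$ and a real function $f$ defined on its spectrum, $f(A)$ is defined by functional calculus. ''Spectrum contained in $[m,M]$'' means $mI\le A\le MI$. A matrix mean is a binary operation $\sigma:\mathbb{P}_n\times\mathbb{P}_n\to\mathbb{P}_n$ such that (i) $A\le C$ and $B\le D$ imply $A\sigma B\le C\sigma D$; (ii) $C^*(A\sigma B)C\le (C^*AC)\sigma(C^*BC)$ for all $C$; (iii) if $A_k\downarrow A$ and $B_k\downarrow B$ (decreasing sequences converging) then $A_k\sigma B_k\downarrow A\sigma B$; (iv) $I\sigma I=I$. *)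

(* Defs.v *)
From HB Require Import structures.
From mathcomp Require Import all_boot all_order all_algebra.
From mathcomp Require Import sesquilinear spectral.
From mathcomp Require Import complex.
From mathcomp Require Import all_classical all_reals.
From mathcomp Require Import topology normedtype sequences derive.

Set Implicit Arguments.
Unset Strict Implicit.
Unset Printing Implicit Defensive.

Import Order.TTheory GRing.Theory Num.Theory.
Import numFieldNormedType.Exports.
Local Open Scope ring_scope.
Local Open Scope sesquilinear_scope.
Local Open Scope classical_set_scope.
Local Open Scope ring_scope.

Section MatrixAnalysis.
Variable R : realType.
Local Notation C := (R[i]).

Definition RtoC (x : R) : C := (x%:C)%C.

Definition adjmx (m n : nat) (A : 'M[C]_(m, n)) : 'M[C]_(n, m) := A ^t*.

Definition psdmx (n : nat) (A : 'M[C]_n) : Prop :=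
  A \is hermsymmx /\ forall v : 'rV[C]_n, 0 <= (v *m A *m v ^t*) 0 0.

Definition pdmx (n : nat) (A : 'M[C]_n) : Prop :=
  A \is hermsymmx /\ forall v : 'rV[C]_n, v != 0 -> 0 < (v *m A *m v ^t*) 0 0.

Definition loewner_le (n : nat) (A B : 'M[C]_n) : Prop := psdmx (B - A).

Definition spec_in (n : nat) (m M : R) (A : 'M[C]_n) : Prop :=
  loewner_le (RtoC m)%:M A /\ loewner_le A (RtoC M)%:M.

(* For Hermitian A the eigenvalues lambda_i are real, so f is applied to
   their real parts. *)
Definition mxfun (f : R -> R) (n : nat) (A : 'M[C]_n) : 'M[C]_n :=
  invmx (spectralmx A) *m
  diag_mx (map_mx (fun z : C => RtoC (f (complex.Re z))) (spectral_diag A))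
  *m spectralmx A.

(* entrywise convergence of a sequence of matrices (= convergence in any
   norm on the finite-dimensional space M_n) *)
Definition mx_cvg (n : nat) (Ak : nat -> 'M[C]_n) (A : 'M[C]_n) : Prop :=
  forall i j : 'I_n,
    (fun k => complex.Re (Ak k i j)) @ \oo --> complex.Re (A i j) /\
    (fun k => complex.Im (Ak k i j)) @ \oo --> complex.Im (A i j).

Definition mx_decr_to (n : nat) (Ak : nat -> 'M[C]_n) (A : 'M[C]_n) : Prop :=
  (forall k, loewner_le (Ak k.+1) (Ak k)) /\ mx_cvg Ak A.

(* matrix mean sigma : P_n x P_n -> P_n (Kubo--Ando axioms (i)-(iv)) *)
Definition matrix_mean (n : nat) (sigma : 'M[C]_n -> 'M[C]_n -> 'M[C]_n)
  : Prop :=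
  (forall A B, psdmx A -> psdmx B -> psdmx (sigma A B)) /\
  (forall A B C' D, psdmx A -> psdmx B -> psdmx C' -> psdmx D ->
     loewner_le A C' -> loewner_le B D ->
     loewner_le (sigma A B) (sigma C' D)) /\
  (forall A B (X : 'M[C]_n), psdmx A -> psdmx B ->
     loewner_le (adjmx X *m sigma A B *m X)
                (sigma (adjmx X *m A *m X) (adjmx X *m B *m X))) /\
  (forall (Ak Bk : nat -> 'M[C]_n) A B,
     (forall k, psdmx (Ak k)) -> (forall k, psdmx (Bk k)) ->
     psdmx A -> psdmx B ->
     mx_decr_to Ak A -> mx_decr_to Bk B ->
     mx_decr_to (fun k => sigma (Ak k) (Bk k)) (sigma A B)) /\
  sigma 1%:M 1%:M = 1%:M.

Definition mx_norm (n : nat) (N : 'M[C]_n -> R) : Prop :=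
  (forall A, 0 <= N A) /\
  (forall A, N A = 0 -> A = 0) /\
  (forall (c : C) A, RtoC (N (c *: A)) = `|c| * RtoC (N A)) /\
  (forall A B, N (A + B) <= N A + N B).

Definition unitarily_invariant_norm (n : nat) (N : 'M[C]_n -> R) : Prop :=
  mx_norm N /\
  forall (A U V : 'M[C]_n), U \is unitarymx -> V \is unitarymx ->
    N (U *m A *m V) = N A.

End MatrixAnalysis.

(* Main.v *)
Set Warnings "-all".
Require Import Defs.
From HB Require Import structures.
From mathcomp Require Import all_boot all_order all_algebra.
From mathcomp Require Import sesquilinear spectral.
From mathcomp Require Import complex.
From mathcomp Require Import all_classical all_reals.
From mathcomp Require Import topology normedtype sequences derive.
Import Order.TTheory GRing.Theory Num.Theory.
Import numFieldNormedType.Exports.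
Local Open Scope ring_scope.
From mathcomp Require Import ring lra.

Local Open Scope sesquilinear_scope.

Section LA.
Context {R : realType}.
Local Notation C := (R[i]).

Lemma hermP {n} (A : 'M[C]_n) : A \is hermsymmx <-> A ^t* = A.
Proof.
split.
- by move/is_hermitianmxP => h; rewrite {2}h expr0 scale1r.
- by move=> h; apply/is_hermitianmxP; rewrite expr0 scale1r h.
Qed.

Lemma trmxC_mul {m n p} (A : 'M[C]_(m, n)) (B : 'M[C]_(n, p)) :
  (A *m B) ^t* = B ^t* *m A ^t*.
Proof. by rewrite trmx_mul map_mxM. Qed.

Lemma trmxC_add {m n} (A B : 'M[C]_(m, n)) : (A + B) ^t* = A ^t* + B ^t*.
Proof. by apply/matrixP => i j; rewrite !mxE rmorphD. Qed.

Lemma trmxC_opp {m n} (A : 'M[C]_(m, n)) : (- A) ^t* = - A ^t*.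
Proof. by apply/matrixP => i j; rewrite !mxE rmorphN. Qed.

Lemma trmxC_sub {m n} (A B : 'M[C]_(m, n)) : (A - B) ^t* = A ^t* - B ^t*.
Proof. by rewrite trmxC_add trmxC_opp. Qed.

Lemma trmxC_scale {m n} (c : C) (A : 'M[C]_(m, n)) : (c *: A) ^t* = c^* *: A ^t*.
Proof. by apply/matrixP => i j; rewrite !mxE rmorphM. Qed.

Lemma RtoC_conj (x : R) : (RtoC x)^* = RtoC x.
Proof. by rewrite /RtoC; apply: conjc_real. Qed.

Lemma trmxC_scalar {n} (c : C) : (c%:M : 'M[C]_n) ^t* = (c^*)%:M.
Proof. by apply/matrixP => i j; rewrite !mxE rmorphMn eq_sym. Qed.

Lemma psd_herm {n} (A : 'M[C]_n) : psdmx A -> A ^t* = A.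
Proof. by case=> /hermP. Qed.

Lemma psd_congr {n} (A X : 'M[C]_n) : psdmx A -> psdmx (X ^t* *m A *m X).
Proof.
case=> /hermP hA hf; split.
  by apply/hermP; rewrite !trmxC_mul trmxCK hA mulmxA.
move=> v; have := hf (v *m X ^t*).
by rewrite !trmxC_mul trmxCK !mulmxA.
Qed.

Lemma psd_add {n} (A B : 'M[C]_n) : psdmx A -> psdmx B -> psdmx (A + B).
Proof.
case=> /hermP hA fA [/hermP hB fB]; split.
  by apply/hermP; rewrite trmxC_add hA hB.
move=> v; rewrite mulmxDr mulmxDl mxE; exact: addr_ge0.
Qed.

Lemma psd_scale {n} (c : R) (A : 'M[C]_n) : 0 <= c -> psdmx A -> psdmx (RtoC c *: A).
Proof.
move=> c0 [/hermP hA fA]; split.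
  by apply/hermP; rewrite trmxC_scale hA RtoC_conj.
move=> v; rewrite -scalemxAr -scalemxAl mxE; apply: mulr_ge0 => //.
by rewrite /RtoC ler0c.
Qed.

Lemma psd0 {n} : psdmx (0 : 'M[C]_n).
Proof.
split; first by apply/hermP; apply/matrixP => i j; rewrite !mxE rmorph0.
by move=> v; rewrite mulmx0 mul0mx mxE.
Qed.

Lemma form_entry {n} (A : 'M[C]_n) j :
  ((delta_mx 0 j : 'rV[C]_n) *m A *m (delta_mx 0 j : 'rV[C]_n) ^t*) 0 0 = A j j.
Proof.
rewrite -rowE.
rewrite mxE (bigD1 j) //= big1 ?addr0.
  by rewrite !mxE !eqxx /= rmorph1 mulr1.
by move=> k kj; rewrite !mxE (negbTE kj) /= rmorph0 mulr0.
Qed.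

Lemma psd_entry {n} (A : 'M[C]_n) j : psdmx A -> 0 <= A j j.
Proof. by case=> _ /(_ (delta_mx 0 j : 'rV[C]_n)); rewrite form_entry. Qed.

Lemma psd_diag {n} (d : 'rV[C]_n) : (forall j, 0 <= d 0 j) -> psdmx (diag_mx d).
Proof.
move=> hd; split.
  apply/hermP; apply/matrixP => i j; rewrite !mxE eq_sym.
  case: eqP => [->|_]; last by rewrite !mulr0n rmorph0.
  by rewrite !mulr1n; apply: CrealP; apply: ger0_real.
move=> v; rewrite mxE; apply: sumr_ge0 => k _.
rewrite mxE (bigD1 k) //= big1 ?addr0.
  rewrite !mxE eqxx mulr1n mulrAC; apply: mulr_ge0 => //.
  exact: mulcJ_ge0.
by move=> l lk; rewrite !mxE (negbTE lk) mulr0n mulr0.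
Qed.
End LA.
Arguments psd_add {R n A B}.
Arguments psd_scale {R n c A}.
Arguments psd_congr {R n A} X.
Arguments psd_entry {R n A} j.
Arguments psd_diag {R n d}.
Arguments psd_herm {R n A}.

Local Open Scope sesquilinear_scope.
Section SP.
Context {R : realType}.
Local Notation C := (R[i]).

Lemma RtoCB (x y : R) : RtoC (x - y) = RtoC x - RtoC y.
Proof. by rewrite /RtoC rmorphB. Qed.
Lemma RtoCM (x y : R) : RtoC (x * y) = RtoC x * RtoC y.
Proof. by rewrite /RtoC rmorphM. Qed.
Lemma RtoCD (x y : R) : RtoC (x + y) = RtoC x + RtoC y.
Proof. by rewrite /RtoC rmorphD. Qed.
Lemma RtoC_le (x y : R) : (RtoC x <= RtoC y) = (x <= y).
Proof. exact: lecR. Qed.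
Lemma RtoC_inj : injective (@RtoC R).
Proof. exact: complexI. Qed.

Section Herm.
Variables (n : nat) (A : 'M[C]_n).
Hypothesis hA : A \is hermsymmx.
Local Notation U := (spectralmx A).
Local Notation d := (spectral_diag A).

Lemma U_unitary : U \is unitarymx. Proof. exact: spectral_unitarymx. Qed.

Lemma UUt : U *m U ^t* = 1%:M. Proof. exact/unitarymxP/U_unitary. Qed.
Lemma UtU : U ^t* *m U = 1%:M.
Proof.
by rewrite -(invmx_unitary U_unitary) mulVmx // unitarymx_unit // U_unitary.
Qed.

Lemma spec_decomp : A = U ^t* *m diag_mx d *m U.
Proof.
have /orthomx_spectralP h := hermitian_normalmx hA.
by rewrite {1}h invmx_unitary // U_unitary.
Qed.

Lemma mxfunE g : mxfun g A = U ^t* *m diag_mx (map_mx (fun z : C => RtoC (g (complex.Re z))) d) *m U.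
Proof. by rewrite /mxfun invmx_unitary // U_unitary. Qed.

Lemma diag_conj : U *m A *m U ^t* = diag_mx d.
Proof.
have h := spec_decomp; have h1 := UUt; set P := spectralmx A in h h1 *.
by rewrite [in LHS]h !mulmxA h1 mul1mx -mulmxA h1 mulmx1.
Qed.

Lemma d_real j : d 0 j = RtoC (complex.Re (d 0 j)).
Proof.
have /mxOverP h := hermitian_spectral_diag_real hA.
by rewrite /RtoC RRe_real // h.
Qed.

Lemma conj_scalar (c : C) : U *m c%:M *m U ^t* = c%:M.
Proof. by rewrite mul_mx_scalar -scalemxAl UUt scalemx1. Qed.

Lemma eig_lb (c : R) : psdmx (A - (RtoC c)%:M) -> forall j, c <= complex.Re (d 0 j).
Proof.
move=> /((@psd_congr _ _ _ (U ^t*))); rewrite trmxCK mulmxBr mulmxBl diag_conj conj_scalar.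
move=> h j; have := @psd_entry _ _ _ j h; rewrite !mxE eqxx !mulr1n subr_ge0.
by rewrite {1}d_real RtoC_le.
Qed.

Lemma eig_ub (c : R) : psdmx ((RtoC c)%:M - A) -> forall j, complex.Re (d 0 j) <= c.
Proof.
move=> /((@psd_congr _ _ _ (U ^t*))); rewrite trmxCK mulmxBr mulmxBl diag_conj conj_scalar.
move=> h j; have := @psd_entry _ _ _ j h; rewrite !mxE eqxx !mulr1n subr_ge0.
by rewrite {1}d_real RtoC_le.
Qed.

Lemma psd_mxfun (c e : R) g : psdmx (A - (RtoC c)%:M) -> psdmx ((RtoC e)%:M - A) ->
  (forall x, c <= x -> x <= e -> 0 <= g x) -> psdmx (mxfun g A).
Proof.
move=> h1 h2 hg; rewrite mxfunE.
have := @psd_congr _ _ _ U (@psd_diag _ _ (map_mx (fun z : C => RtoC (g (complex.Re z))) d) _).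
apply => j; rewrite mxE /RtoC ler0c; apply: hg.
  exact: eig_lb. exact: eig_ub.
Qed.

Lemma mxfunB g h : mxfun g A - mxfun h A = mxfun (fun x => g x - h x) A.
Proof.
rewrite !mxfunE -mulmxBl -mulmxBr -linearB; congr (_ *m diag_mx _ *m _).
by apply/matrixP => i j; rewrite !mxE RtoCB.
Qed.

Lemma mxfun_lin (a : R) : mxfun (fun x => a * x) A = RtoC a *: A.
Proof.
have h := spec_decomp; rewrite mxfunE; set P := spectralmx A in h *.
rewrite [in RHS]h scalemxAl scalemxAr -linearZ /=; congr (_ *m diag_mx _ *m _).
apply/matrixP => i j; rewrite !mxE ord1.
by rewrite RtoCM -d_real.
Qed.
End Herm.
End SP.
Arguments U_unitary {R n A}.
Arguments UUt {R n A}.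
Arguments UtU {R n A}.
Arguments spec_decomp {R n A} hA.
Arguments mxfunE {R n A} g.
Arguments diag_conj {R n A} hA.
Arguments d_real {R n A} hA j.
Arguments conj_scalar {R n A} c.
Arguments eig_lb {R n A} hA c _ j.
Arguments eig_ub {R n A} hA c _ j.
Arguments psd_mxfun {R n A} hA c e g _ _ _.
Arguments mxfunB {R n A} g h.
Arguments mxfun_lin {R n A} hA a.

Local Open Scope sesquilinear_scope.
Section MEAN.
Context {R : realType}.
Local Notation C := (R[i]).
Variable n : nat.
Implicit Types A B P Q : 'M[C]_n.

Lemma lw_trans A B Q : psdmx (B - A) -> psdmx (Q - B) -> psdmx (Q - A).
Proof.
move=> h1 h2; have := psd_add h2 h1.
by rewrite addrA subrK.
Qed.

Lemma sqrt_congr (c : R) P : 0 <= c ->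
  ((RtoC (Num.sqrt c))%:M : 'M[C]_n) ^t* *m P *m (RtoC (Num.sqrt c))%:M = RtoC c *: P.
Proof.
move=> c0; rewrite trmxC_scalar RtoC_conj mul_scalar_mx mul_mx_scalar scalerA.
by rewrite -RtoCM -expr2 sqr_sqrtr.
Qed.

Variable sigma : 'M[C]_n -> 'M[C]_n -> 'M[C]_n.
Hypothesis hs : matrix_mean sigma.

Lemma mean_psd P Q : psdmx P -> psdmx Q -> psdmx (sigma P Q).
Proof. by case: hs => h _; apply: h. Qed.

Lemma mean_mono A B P Q : psdmx A -> psdmx B -> psdmx P -> psdmx Q ->
  psdmx (P - A) -> psdmx (Q - B) -> psdmx (sigma P Q - sigma A B).
Proof. by case: hs => _ [h _]; apply: h. Qed.

Lemma mean_hom_lb (c : R) P Q : 0 <= c -> psdmx P -> psdmx Q ->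
  psdmx (sigma (RtoC c *: P) (RtoC c *: Q) - RtoC c *: sigma P Q).
Proof.
move=> c0 hP hQ; case: hs => _ [_ [h _]].
have := h P Q (RtoC (Num.sqrt c))%:M hP hQ; rewrite /loewner_le /adjmx.
by rewrite !sqrt_congr.
Qed.

Lemma mean_hom_ub (c : R) P Q : 0 < c -> psdmx P -> psdmx Q ->
  psdmx (RtoC c *: sigma P Q - sigma (RtoC c *: P) (RtoC c *: Q)).
Proof.
move=> c0 hP hQ.
have c0' : 0 <= c^-1 by rewrite invr_ge0 ltW.
have := mean_hom_lb _ _ _ c0' (psd_scale (ltW c0) hP) (psd_scale (ltW c0) hQ).
have e : forall X : 'M[C]_n, RtoC c^-1 *: (RtoC c *: X) = X.
  by move=> X; rewrite scalerA -RtoCM mulVf ?gt_eqF // /RtoC scale1r.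
have e' : forall X : 'M[C]_n, RtoC c *: (RtoC c^-1 *: X) = X.
  by move=> X; rewrite scalerA -RtoCM mulfV ?gt_eqF // /RtoC scale1r.
rewrite !e => /(psd_scale (ltW c0)).
by rewrite scalerBr e'.
Qed.
End MEAN.
Arguments mean_psd {R n sigma} hs {P Q}.
Arguments mean_mono {R n sigma} hs {A B P Q}.
Arguments mean_hom_lb {R n sigma} hs c {P Q}.
Arguments mean_hom_ub {R n sigma} hs c {P Q}.
Arguments lw_trans {R n A B Q}.

Local Open Scope sesquilinear_scope.
Section NORM.
Context {R : realType}.
Local Notation C := (R[i]).
Variable n : nat.
Variable N : 'M[C]_n -> R.
Hypothesis hN : unitarily_invariant_norm N.

Lemma N_ge0 X : 0 <= N X.
Proof. by case: hN => [[h _] _]. Qed.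

Lemma N_tri X Y : N (X + Y) <= N X + N Y.
Proof. by case: hN => [[_ [_ [_ h]]] _]. Qed.

Lemma N_scale (c : R) X : 0 <= c -> N (RtoC c *: X) = c * N X.
Proof.
move=> c0; case: hN => [[_ [_ [h _]]] _]; apply: RtoC_inj.
by rewrite h RtoCM ger0_norm // /RtoC ler0c.
Qed.

Lemma unitary1 : (1%:M : 'M[C]_n) \is unitarymx.
Proof. by apply/unitarymxP; rewrite trmx1 map_mx1 mulmx1. Qed.

Lemma N_unit U V X : U \is unitarymx -> V \is unitarymx -> N (U *m X *m V) = N X.
Proof. by case: hN => _ h; apply: h. Qed.

Lemma N_unitl U X : U \is unitarymx -> N (U *m X) = N X.
Proof. by move=> hU; rewrite -[U *m X]mulmx1 N_unit // unitary1. Qed.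

Lemma N_conv (a b : R) X Y : 0 <= a -> 0 <= b ->
  N (RtoC a *: X + RtoC b *: Y) <= a * N X + b * N Y.
Proof. by move=> a0 b0; rewrite -!N_scale //; apply: N_tri. Qed.

Definition srow (k : 'I_n) : 'rV[C]_n := \row_j (if j == k then -1 else 1).
Definition Smx k := diag_mx (srow k).

Lemma srow_sq k j : srow k 0 j * srow k 0 j = 1.
Proof. by rewrite mxE; case: ifP => _; rewrite ?mulrNN mulr1. Qed.

Lemma srow_conj k j : (srow k 0 j)^* = srow k 0 j.
Proof. by rewrite mxE; case: ifP => _; rewrite ?rmorphN rmorph1. Qed.

Lemma Smx_adj k : (Smx k) ^t* = Smx k.
Proof.
apply/matrixP => i j; rewrite !mxE rmorphMn.
case: (eqVneq i j) => [->|ij]; last by rewrite /= !mulr0n.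
by rewrite /= !mulr1n; case: ifP => _; rewrite ?rmorphN rmorph1.
Qed.

Lemma Smx_unitary k : Smx k \is unitarymx.
Proof.
apply/unitarymxP; rewrite Smx_adj /Smx mul_diag_mx.
apply/matrixP => i j; rewrite !mxE.
case: (eqVneq i j) => [->|ij]; last by rewrite /= mulr0n mulr0.
by rewrite /= mulr1n; case: ifP => _; rewrite ?mulrNN mulr1.
Qed.

Definition Zr (r : nat) (Y : 'M[C]_n) : 'M[C]_n :=
  \matrix_(i, j) (if (i == j) || ((r <= i)%N && (r <= j)%N) then Y i j else 0).

Lemma Zr0 Y : Zr 0 Y = Y.
Proof. by apply/matrixP => i j; rewrite mxE !leq0n orbT. Qed.

Lemma pinch_le k Y : N (RtoC (1/2) *: Y + RtoC (1/2) *: (Smx k *m Y *m Smx k)) <= N Y.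
Proof.
have h2 : 0 <= 1 / 2 :> R by rewrite divr_ge0 ?ler01 ?ler0n.
apply: (le_trans (N_conv _ _ _ _ h2 h2)).
by rewrite N_unit ?Smx_unitary // -mulrDl -splitr mul1r.
Qed.

Lemma half_add (x : C) : RtoC (1/2) * x + RtoC (1/2) * x = x.
Proof. by rewrite -mulrDl -RtoCD -splitr /RtoC mul1r. Qed.

Lemma half_sub (x : C) : RtoC (1/2) * x + RtoC (1/2) * - x = 0.
Proof. by rewrite mulrN subrr. Qed.

Lemma Zr_step (k : 'I_n) Y :
  Zr k.+1 Y = RtoC (1/2) *: Zr k Y + RtoC (1/2) *: (Smx k *m Zr k Y *m Smx k).
Proof.
apply/matrixP => i j; rewrite /Smx mul_diag_mx mul_mx_diag !mxE.
have [->|ik] := eqVneq i k; have [->|jk] := eqVneq j k.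
- by rewrite /= mulN1r mulrN1 opprK half_add.
- by rewrite /= ltnn /= mulr1 mulN1r half_sub.
- by rewrite (negbTE ik) ltnn leqnn !andbF andbT /= !mul1r mulrN1 ?mul1r mulrN subrr.
have ki : (k < i)%N = (k <= i)%N by rewrite ltn_neqAle val_eqE eq_sym ik.
have kj : (k < j)%N = (k <= j)%N by rewrite ltn_neqAle val_eqE eq_sym jk.
rewrite ki kj [1 * (if _ then _ else _)]mul1r mulr1; case: ifP => _; first by rewrite half_add.
by rewrite mulr0 addr0.
Qed.

Lemma Zr_le r Y : N (Zr r Y) <= N Y.
Proof.
elim: r => [|r IH]; first by rewrite Zr0.
case: (ltnP r n) => rn.
  have -> : r = Ordinal rn by [].
  by rewrite Zr_step; apply: le_trans (pinch_le _ _) IH.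
suff -> : Zr r.+1 Y = Zr r Y by [].
apply/matrixP => i j; rewrite !mxE.
have hi : (r <= i)%N = false by apply/negbTE; rewrite -ltnNge; apply: leq_trans (ltn_ord i) rn.
have hi' : (r < i)%N = false by apply/negbTE; rewrite -leqNgt; apply: ltnW; apply: leq_trans (ltn_ord i) rn.
by rewrite hi hi'.
Qed.

Lemma pinch_diag (Y : 'M[C]_n) : N (diag_mx (\row_j Y j j)) <= N Y.
Proof.
suff -> : diag_mx (\row_j Y j j) = Zr n Y by apply: Zr_le.
apply/matrixP => i j; rewrite !mxE.
have -> : (n <= i)%N = false by apply/negbTE; rewrite -ltnNge.
rewrite orbF; case: eqVneq => [->|_]; by rewrite ?mulr1n ?mulr0n.
Qed.

End NORM.
Arguments N_ge0 {R n N} hN X.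
Arguments N_tri {R n N} hN X Y.
Arguments N_scale {R n N} hN c X _.
Arguments N_unit {R n N} hN U V X _ _.
Arguments N_unitl {R n N} hN U X _.
Arguments N_conv {R n N} hN a b X Y _ _.
Arguments Smx {R n} k.
Arguments Smx_unitary {R n} k.
Arguments pinch_diag {R n N} hN Y.

Local Open Scope sesquilinear_scope.
Section NORM2.
Context {R : realType}.
Local Notation C := (R[i]).
Variable n : nat.
Variable N : 'M[C]_n -> R.
Hypothesis hN : unitarily_invariant_norm N.

Definition Ek (k : 'I_n) (g : R) : 'M[C]_n :=
  diag_mx (\row_j (if j == k then RtoC g else 1)).

Lemma Ek_le k g X : -1 <= g <= 1 -> N (Ek k g *m X) <= N X.
Proof.
move=> /andP[g1 g2].
have a0 : 0 <= (1 + g) / 2 by rewrite divr_ge0 ?ler0n // -lerBlDl sub0r.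
have b0 : 0 <= (1 - g) / 2 by rewrite divr_ge0 ?ler0n // subr_ge0.
have -> : Ek k g *m X = RtoC ((1 + g) / 2) *: X + RtoC ((1 - g) / 2) *: (Smx k *m X).
  apply/matrixP => i j; rewrite /Ek /Smx !mul_diag_mx !mxE.
  rewrite mulrA -mulrDl; congr (_ * _).
  rewrite /RtoC; case: ifP => _.
    by rewrite mulrN1 -rmorphN -rmorphD; congr (_%:C)%C; field.
  by rewrite mulr1 -rmorphD; congr (_%:C)%C; field.
apply: le_trans (N_conv hN _ _ _ _ a0 b0) _.
rewrite N_unitl ?Smx_unitary // -mulrDl.
suff -> : (1 + g) / 2 + (1 - g) / 2 = 1 :> R by rewrite mul1r.
by field.
Qed.

Definition Wr (r : nat) (g : 'I_n -> R) : 'M[C]_n :=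
  diag_mx (\row_j (if (j < r)%N then RtoC (g j) else 1)).

Lemma Wr_step (k : 'I_n) g : Wr k.+1 g = Ek k (g k) *m Wr k g.
Proof.
apply/matrixP => i j; rewrite /Wr /Ek mul_diag_mx !mxE.
case: (eqVneq i j) => [->|ij]; last by rewrite /= !mulr0n mulr0.
rewrite /= !mulr1n; case: (eqVneq j k) => [->|ik].
  by rewrite ltnSn ltnn mulr1.
rewrite mul1r ltnS leq_eqVlt.
suff -> : (nat_of_ord j == nat_of_ord k) = false by [].
by apply: negbTE; rewrite val_eqE.
Qed.

Lemma Wr_le r g X : (forall j, -1 <= g j <= 1) -> N (Wr r g *m X) <= N X.
Proof.
move=> hg; elim: r => [|r IH].
  suff -> : Wr 0 g *m X = X by [].
  by apply/matrixP => i j; rewrite /Wr mul_diag_mx !mxE mul1r.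
case: (ltnP r n) => rn.
  have -> : r = Ordinal rn by [].
  by rewrite Wr_step -mulmxA; apply: le_trans (Ek_le _ _ _ (hg _)) IH.
suff -> : Wr r.+1 g = Wr r g by [].
apply/matrixP => i j; rewrite !mxE.
have hi : (i < r)%N by apply: leq_trans (ltn_ord i) rn.
by rewrite hi ltnS ltnW.
Qed.

Lemma diag_shrink (g : 'I_n -> R) X : (forall j, -1 <= g j <= 1) ->
  N (diag_mx (\row_j RtoC (g j)) *m X) <= N X.
Proof.
move=> hg; suff -> : diag_mx (\row_j RtoC (g j)) = Wr n g by apply: Wr_le.
by apply/matrixP => i j; rewrite !mxE ltn_ord.
Qed.
End NORM2.

Local Open Scope sesquilinear_scope.
Section NORM3.
Context {R : realType}.
Local Notation C := (R[i]).
Variable n : nat.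
Variable N : 'M[C]_n -> R.
Hypothesis hN : unitarily_invariant_norm N.

Lemma half_double (X : 'M[C]_n) : (2^-1 : C) *: (X + X) = X.
Proof.
rewrite scalerDr -scalerDl.
have -> : (2^-1 + 2^-1 : C) = 1.
  by field.
by rewrite scale1r.
Qed.

Lemma herm_of_sandwich (H T : 'M[C]_n) : psdmx (T + H) -> psdmx (T - H) -> H \is hermsymmx.
Proof.
move=> /psd_herm h1 /psd_herm h2; apply/hermP.
rewrite trmxC_add in h1; rewrite trmxC_sub in h2.
have e2 : forall a b : 'M[C]_n, (a + b) - (a - b) = b + b.
  by move=> a b; rewrite opprB addrC addrA subrK.
have : (T^t* + H^t*) - (T^t* - H^t*) = (T + H) - (T - H) by rewrite h1 h2.
by rewrite !e2 => e; rewrite -(half_double (H^t*)) e half_double.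
Qed.

Lemma cplx_split (z : C) : z = (complex.Re z +i* complex.Im z)%C.
Proof. by case: z. Qed.

Lemma norm_sandwich (H T : 'M[C]_n) : psdmx (T + H) -> psdmx (T - H) -> N H <= N T.
Proof.
move=> hp hm; have hH := herm_of_sandwich _ _ hp hm.
set V := spectralmx H; set d := spectral_diag H.
have Vu : V \is unitarymx by apply: U_unitary.
have Vtu : V ^t* \is unitarymx by rewrite trmxC_unitary.
set T2 := V *m T *m V ^t*.
have hdc := diag_conj hH; rewrite -/V -/d in hdc.
have hp2 := psd_congr (V ^t*) hp; rewrite trmxCK mulmxDr mulmxDl hdc -/T2 in hp2.
have hm2 := psd_congr (V ^t*) hm; rewrite trmxCK mulmxBr mulmxBl hdc -/T2 in hm2.
have T2E : T2 = V *m T *m V ^t* by [].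
clearbody T2.
pose del j := complex.Re (d 0 j).
pose tau j := complex.Re (T2 j j).
have dE j : d 0 j = RtoC (del j) by rewrite /del d_real.
have bnd j : [/\ T2 j j = RtoC (tau j), - tau j <= del j & del j <= tau j].
  have := psd_entry j hp2; have := psd_entry j hm2.
  rewrite !mxE eqxx !mulr1n dE (cplx_split (T2 j j)) -/(tau j) /RtoC !lecE /=.
  rewrite !subr0 !addr0 => /andP[/eqP i1 r1] /andP[/eqP i2 r2].
  by split; [rewrite i1 | lra | lra].
pose g j := del j / tau j.
have hg j : -1 <= g j <= 1.
  have [_ b1 b2] := bnd j; rewrite /g.
  have [t0|t0] := eqVneq (tau j) 0.
    by rewrite t0 invr0 mulr0 lerN10 ler01.
  have tp : 0 < tau j by rewrite lt_def t0 /=; lra.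
  by rewrite ler_pdivrMr // ler_pdivlMr // mul1r mulN1r b1 b2.
have eD : diag_mx d = diag_mx (\row_j RtoC (g j)) *m diag_mx (\row_j T2 j j).
  apply/matrixP => i j; rewrite mul_diag_mx !mxE.
  case: (eqVneq i j) => [->|ij]; last by rewrite /= !mulr0n mulr0.
  rewrite /= !mulr1n; have [tE b1 b2] := bnd j; rewrite tE dE -RtoCM /g.
  have [t0|t0] := eqVneq (tau j) 0.
    by rewrite t0 mulr0; congr RtoC; lra.
  by rewrite divfK.
have NH : N H = N (diag_mx d).
  by rewrite {1}(spec_decomp hH) -/V -/d N_unit.
have NT : N T = N T2.
  have -> : T = V ^t* *m T2 *m V.
    by rewrite T2E !mulmxA UtU // mul1mx -mulmxA UtU // mulmx1.
  by rewrite N_unit.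
rewrite NH NT eD; apply: le_trans (diag_shrink _ _ hN _ _ hg) _.
exact: pinch_diag.
Qed.
End NORM3.

Section DER.
Context {R : realType}.

Lemma der_right_ge (f : R -> R) x c e : derivable f x 1 -> 0 < e ->
  (forall h, 0 < h -> h < e -> c <= h^-1 * (f (h + x) - f x)) -> c <= derive1 f x.
Proof.
move=> df e0 hq; rewrite derive1E ['D_1 f x]cvg_at_rightE //.
apply: limr_ge.
  rewrite -(cvg_at_rightE (fun h : R => h^-1 *: ((f \o shift x) _ - f x))) //.
  apply: cvg_trans df; apply: cvg_app.
  move=> A [r r0 Ar]; exists r => // y yr ygt0; apply: Ar => //.
  exact/lt0r_neq0.
near=> h; rewrite /= [_%:A]mulr1.
apply: hq; near: h; [exact: nbhs_right_gt | exact: nbhs_right_lt].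
Unshelve. all: by end_near. Qed.

Lemma der_right_le (f : R -> R) x c e : derivable f x 1 -> 0 < e ->
  (forall h, 0 < h -> h < e -> h^-1 * (f (h + x) - f x) <= c) -> derivable f x 1 /\ derive1 f x <= c.
Proof.
move=> df e0 hq; split => //; rewrite derive1E ['D_1 f x]cvg_at_rightE //.
apply: limr_le.
  rewrite -(cvg_at_rightE (fun h : R => h^-1 *: ((f \o shift x) _ - f x))) //.
  apply: cvg_trans df; apply: cvg_app.
  move=> A [r r0 Ar]; exists r => // y yr ygt0; apply: Ar => //.
  exact/lt0r_neq0.
near=> h; rewrite /= [_%:A]mulr1.
apply: hq; near: h; [exact: nbhs_right_gt | exact: nbhs_right_lt].
Unshelve. all: by end_near. Qed.

Lemma der_left_ge (f : R -> R) x c e : derivable f x 1 -> 0 < e ->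
  (forall h, h < 0 -> - e < h -> c <= h^-1 * (f (h + x) - f x)) -> c <= derive1 f x.
Proof.
move=> df e0 hq; rewrite derive1E ['D_1 f x]cvg_at_leftE //.
apply: limr_ge.
  rewrite -(cvg_at_leftE (fun h : R => h^-1 *: ((f \o shift x) _ - f x))) //.
  apply: cvg_trans df; apply: cvg_app.
  move=> A [r r0 Ar]; exists r => // y yr ygt0; apply: Ar => //.
  exact/ltr0_neq0.
near=> h; rewrite /= [_%:A]mulr1.
apply: hq; near: h; [exact: nbhs_left_lt | apply: nbhs_left_gt; rewrite oppr_lt0].
Unshelve. all: by end_near. Qed.
End DER.

Section FS.
Context {R : realType}.
Variable f : R -> R.
Hypothesis hpos : forall x, 0 <= x -> 0 <= f x.
Hypothesis hconv : forall x y t, 0 <= x -> 0 <= y -> 0 <= t -> t <= 1 ->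
     f (t * x + (1 - t) * y) <= t * f x + (1 - t) * f y.
Hypothesis hder : forall x, 0 <= x -> derivable f x 1.
Hypothesis hf0 : f 0 = 0.

Lemma f_scale x t : 0 <= x -> 0 <= t -> t <= 1 -> f (t * x) <= t * f x.
Proof.
move=> x0 t0 t1; have := hconv x 0 t x0 (lexx 0) t0 t1.
by rewrite !mulr0 !addr0 hf0 mulr0 addr0.
Qed.

Lemma a_ge0 : 0 <= derive1 f 0.
Proof.
apply: (der_right_ge f 0 0 1) => //; first exact: hder.
move=> h h0 _; rewrite addr0 hf0 subr0; apply: mulr_ge0.
  by rewrite invr_ge0 ltW.
exact/hpos/ltW.
Qed.

Lemma lower x : 0 <= x -> derive1 f 0 * x <= f x.
Proof.
rewrite le_eqVlt => /orP[/eqP <-|x0]; first by rewrite mulr0 hf0.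
suff hq : forall h, 0 < h -> h < x -> h^-1 * (f (h + 0) - f 0) <= f x / x.
  have [_ h] := der_right_le f 0 (f x / x) x (hder 0 (lexx 0)) x0 hq.
  by rewrite -ler_pdivlMr.
move=> h h0 hx; rewrite addr0 hf0 subr0.
have t0 : 0 <= h / x by rewrite divr_ge0 ?ltW.
have t1 : h / x <= 1 by rewrite ler_pdivrMr // mul1r ltW.
have := f_scale _ _ (ltW x0) t0 t1; rewrite mulfVK ?gt_eqF // => hh.
apply: le_trans (ler_wpM2l _ hh) _; first by rewrite invr_ge0 ltW.
have hn : h != 0 by rewrite gt_eqF.
have xn : x != 0 by rewrite gt_eqF.
rewrite le_eqVlt; apply/orP; left; apply/eqP; field; exact/andP.

Qed.

Lemma fM_le M : 0 < M -> f M / M <= derive1 f M.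
Proof.
move=> M0.
suff hq : forall h, h < 0 -> - M < h -> f M / M <= h^-1 * (f (h + M) - f M).
  exact: (der_left_ge f M (f M / M) M (hder M (ltW M0)) M0 hq).
move=> h h0 hM.
have t0 : 0 <= (h + M) / M by rewrite divr_ge0 ?ltW //; lra.
have t1 : (h + M) / M <= 1 by rewrite ler_pdivrMr // mul1r; lra.
have := f_scale _ _ (ltW M0) t0 t1; rewrite mulfVK ?gt_eqF // => hh.
have hh2 : f (h + M) - f M <= h / M * f M.
  have -> : h / M * f M = (h + M) / M * f M - f M.
    by field; rewrite gt_eqF.
  by rewrite lerD2r.
have hi : h^-1 <= 0 by rewrite invr_le0 ltW.
apply: le_trans (ler_wnM2l hi hh2).
have hn : h != 0 by rewrite lt_eqF.
have xn : M != 0 by rewrite gt_eqF.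
rewrite le_eqVlt; apply/orP; left; apply/eqP; field; exact/andP.
Qed.

Lemma upper M x : 0 < M -> 0 <= x -> x <= M -> f x <= derive1 f M * x.
Proof.
move=> M0 x0 xM.
have t0 : 0 <= x / M by apply: divr_ge0 => //; apply: ltW.
have t1 : x / M <= 1 by rewrite ler_pdivrMr // mul1r.
have := f_scale _ _ (ltW M0) t0 t1; rewrite mulfVK ?gt_eqF // => hh.
apply: le_trans hh _.
rewrite mulrAC -mulrA mulrC; apply: ler_wpM2r => //.
exact: fM_le.
Qed.

Lemma a_le_b M : 0 < M -> derive1 f 0 <= derive1 f M.
Proof.
move=> M0; have h1 := lower _ (ltW M0); have h2 := upper _ _ M0 (ltW M0) (lexx M).
by rewrite -(ler_pM2r M0); apply: le_trans h1 h2.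
Qed.
End FS.

Local Open Scope sesquilinear_scope.

Lemma pd_psd {R : realType} {n} {A : 'M[R[i]]_n} : pdmx A -> psdmx A.
Proof.
case=> h1 h2; split => // v; case: (eqVneq v 0) => [->|v0].
  by rewrite !mul0mx mxE.
exact/ltW/h2.
Qed.

Lemma RtoC0mx (R : realType) n : (RtoC (0:R))%:M = 0 :> 'M[R[i]]_n.
Proof. by rewrite raddf0. Qed.
Lemma psd1 (R : realType) n : psdmx (1%:M : 'M[R[i]]_n).
Proof.
split; first by apply/hermP; rewrite trmxC_scalar rmorph1.
move=> v; rewrite mulmx1 mxE; apply: sumr_ge0 => j _; rewrite !mxE.
exact: mulcJ_ge0.
Qed.

Lemma scal1 (R : realType) n (c : R) : RtoC c *: (1%:M : 'M[R[i]]_n) = (RtoC c)%:M.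
Proof. by rewrite scalemx1. Qed.

Theorem mainTheorem3 (R : realType) (f : R -> R) (m M : R) (n : nat)
    (sigma : 'M[R[i]]_n -> 'M[R[i]]_n -> 'M[R[i]]_n)
    (N : 'M[R[i]]_n -> R) (A B : 'M[R[i]]_n) :
  (* f : [0,oo) -> [0,oo), convex, differentiable, f(0) = 0 *)
  (forall x, 0 <= x -> 0 <= f x) ->
  (forall x y t, 0 <= x -> 0 <= y -> 0 <= t -> t <= 1 ->
     f (t * x + (1 - t) * y) <= t * f x + (1 - t) * f y) ->
  (forall x, 0 <= x -> derivable f x 1) ->
  f 0 = 0 ->
  0 < m -> m < M ->
  matrix_mean sigma ->
  unitarily_invariant_norm N ->
  pdmx A -> pdmx B -> spec_in m M A -> spec_in m M B ->
  N (sigma (mxfun f A) (mxfun f B) - mxfun f (sigma A B))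
    <= (derive1 f M - derive1 f 0) * N (sigma A B).
Proof.
move=> hpos hconv hder hf0 m0 mM hs hN hA hB [sA1 sA2] [sB1 sB2].
rewrite /loewner_le in sA1 sA2 sB1 sB2.
have M0 : 0 < M by apply: lt_trans mM.
set a := derive1 f 0; set b := derive1 f M.
have a0 : 0 <= a := a_ge0 f hpos hder hf0.
have ab : a <= b := a_le_b f hconv hder hf0 M M0.
have hlow x : 0 <= x -> a * x <= f x := lower f hconv hder hf0 x.
have hup x : 0 <= x -> x <= M -> f x <= b * x := upper f hconv hder hf0 M x M0.
have Ah : A \is hermsymmx by case: hA.
have Bh : B \is hermsymmx by case: hB.
have Ap := pd_psd hA; have Bp := pd_psd hB.
set T := sigma A B.
have Tp : psdmx T := mean_psd hs Ap Bp.
have Th : T \is hermsymmx by case: Tp.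
have key : forall b', b <= b' -> 0 < b' ->
    N (sigma (mxfun f A) (mxfun f B) - mxfun f T) <= (b' - a) * N T.
  move=> b' bb' b'0.
  have fb : forall (Z : 'M[R[i]]_n) (c : R), Z \is hermsymmx -> 0 <= c ->
      psdmx (Z - (RtoC c)%:M) -> psdmx ((RtoC M)%:M - Z) ->
      [/\ psdmx (mxfun f Z), psdmx (mxfun f Z - RtoC a *: Z)
        & psdmx (RtoC b' *: Z - mxfun f Z)].
    move=> Z c Zh c0 h1 h2; split.
    - apply: (psd_mxfun Zh c M f h1 h2) => x cx xM; apply: hpos.
      exact: le_trans cx.
    - rewrite -(mxfun_lin Zh a) mxfunB.
      apply: (psd_mxfun Zh c M _ h1 h2) => x cx xM.
      by rewrite subr_ge0; apply: hlow; apply: le_trans cx.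
    - rewrite -(mxfun_lin Zh b') mxfunB.
      apply: (psd_mxfun Zh c M _ h1 h2) => x cx xM.
      have x0 : 0 <= x by apply: le_trans cx.
      rewrite subr_ge0; apply: le_trans (hup x x0 xM) _.
      by apply: ler_wpM2r.
  have [fAp fAl fAu] := fb A m Ah (ltW m0) sA1 sA2.
  have [fBp fBl fBu] := fb B m Bh (ltW m0) sB1 sB2.
  have T0 : psdmx (T - (RtoC 0)%:M) by rewrite RtoC0mx subr0.
  have hM1 : psdmx ((RtoC M)%:M : 'M[R[i]]_n).
    by rewrite -scal1; exact: (psd_scale (ltW M0) (psd1 R n)).
  have TM : psdmx ((RtoC M)%:M - T).
    have h1 := mean_mono hs Ap Bp hM1 hM1 sA2 sB2.
    have h2 := mean_hom_ub hs M M0 (psd1 R n) (psd1 R n).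
    have s11 : sigma 1%:M 1%:M = 1%:M by case: hs => _ [_ [_ [_ ->]]].
    rewrite !scal1 s11 scal1 in h2.
    exact: (lw_trans h1 h2).
  have [_ fTl fTu] := fb T 0 Th (lexx 0) T0 TM.
  have b'0W : 0 <= b' := ltW b'0.
  set X := sigma (mxfun f A) (mxfun f B).
  have Xl : psdmx (X - RtoC a *: T).
    have l1 := mean_hom_lb hs a a0 Ap Bp.
    have l2 := mean_mono hs (psd_scale a0 Ap) (psd_scale a0 Bp) fAp fBp fAl fBl.
    exact: (lw_trans l1 l2).
  have Xu : psdmx (RtoC b' *: T - X).
    have u1 := mean_mono hs fAp fBp (psd_scale b'0W Ap) (psd_scale b'0W Bp) fAu fBu.
    have u2 := mean_hom_ub hs b' b'0 Ap Bp.
    exact: (lw_trans u1 u2).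
  set Y := mxfun f T.
  have hp : psdmx (RtoC (b' - a) *: T + (X - Y)).
    have := psd_add Xl fTu.
    suff -> : X - RtoC a *: T + (RtoC b' *: T - Y) = RtoC (b' - a) *: T + (X - Y) by [].
    by apply/matrixP => i j; rewrite !mxE RtoCB; ring.
  have hm : psdmx (RtoC (b' - a) *: T - (X - Y)).
    have := psd_add Xu fTl.
    suff -> : RtoC b' *: T - X + (Y - RtoC a *: T) = RtoC (b' - a) *: T - (X - Y) by [].
    by apply/matrixP => i j; rewrite !mxE RtoCB; ring.
  have := norm_sandwich _ _ hN _ _ hp hm.
  rewrite N_scale //; rewrite subr_ge0; exact: le_trans ab bb'.
have NT0 : 0 <= N T := N_ge0 hN T.
apply/ler_addgt0Pr => e e0.
set e' := e / (N T + 1).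
have NT1 : 0 < N T + 1 by lra.
have e'0 : 0 < e' by rewrite divr_gt0.
have hb1 : b <= b + e' by rewrite lerDl ltW.
have hb2 : 0 < b + e' by lra.
move: (key (b + e') hb1 hb2) => hk; apply: le_trans hk _.
have he : e' * N T <= e.
  rewrite /e' mulrAC ler_pdivrMr //.
  by apply: ler_wpM2l; [exact: ltW | rewrite lerDl].
have -> : (b + e' - a) * N T = (b - a) * N T + e' * N T by ring.
by rewrite lerD2l.
Qed.
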